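(* Fix $\alpha\in(0,1)$ and consider the Monte Carlo permutation test described in the context, and suppose $\mathbb{P}(q(\mathcal{X})<1)>0$. Then: (i) If $B\ge 2$ satisfies $k_B-k_{B-1}=1$ and $k_{B+1}-k_B=0$, then $\mathrm{Pow}(B-1)<\mathrm{Pow}(B)$ and $\mathrm{Pow}(B+1)<\mathrm{Pow}(B)$, i.e. $\mathrm{Pow}(B)$ is a strict local maximum of $B\mapsto\mathrm{Pow}(B)$. (ii) There exist infinitely many integers $B\ge 2$ with $k_{B-1}<k_B=k_{B+1}$; consequently the function $B\mapsto \mathrm{Pow}(B)$ has infinitely many strict local maxima.
   Context: Let $\mathcal{X}$ be a random observed dataset taking values in a space on which a finite group $\mathcal{G}$ acts (write $\mathcal{X}^\pi$ for the action of $\pi\in\mathcal{G}$; the identity of $\mathcal{G}$ fixes every dataset), and let $T$ be a real-valued test statistic. Fix $\alpha\in(0,1)$. For an integer $B\ge1$, let $\pi_1,\dots,\pi_B$ be i.i.d. uniform on $\mathcal{G}$, independent of $\mathcal{X}$. The Monte Carlo permutation $p$-value is $p_B(\mathcal{X})=\bigl(1+\sum_{i=1}^B \mathbf{1}\{T(\mathcal{X}^{\pi_i})\ge T(\mathcal{X})\}\bigr)/(B+1)$, and the test rejects iff $p_B(\mathcal{X})\le\alpha$. Define $q(\mathcal{X})=\mathbb{P}(T(\mathcal{X}^\pi)\ge T(\mathcal{X})\mid \mathcal{X})$ for $\pi$ uniform on $\mathcal{G}$ independent of $\mathcal{X}$ (so $q(\mathcal{X})\in[1/|\mathcal{G}|,1]$),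 $R_B=\sum_{i=1}^B \mathbf{1}\{T(\mathcal{X}^{\pi_i})\ge T(\mathcal{X})\}$ (so $R_B\mid\mathcal{X}\sim\mathrm{Binomial}(B,q(\mathcal{X}))$), and the critical count $k_B=\lfloor (B+1)\alpha\rfloor-1$ for integers $B\ge 0$. Then $\{p_B(\mathcal{X})\le\alpha\}=\{R_B\le k_B\}$. The conditional rejection probability is $\phi_B(\mathcal{X})=\mathbb{P}(R_B\le k_B\mid\mathcal{X})$ and the (unconditional) power is $\mathrm{Pow}(B)=\mathbb{E}[\phi_B(\mathcal{X})]=\mathbb{E}\bigl[\mathbb{P}(\mathrm{Binomial}(B,q(\mathcal{X}))\le k_B\mid\mathcal{X})\bigr]$, for $B\ge1$. *)

(* Defs.v *)
From HB Require Import structures.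
From mathcomp Require Import all_boot all_order all_algebra all_fingroup.
From mathcomp Require Import all_classical all_reals all_analysis.
Set Implicit Arguments. Unset Strict Implicit. Unset Printing Implicit Defensive.
Import Order.TTheory GRing.Theory Num.Theory.
Local Open Scope ring_scope.

Definition kcrit (R : realType) (alpha : R) (B : nat) : int :=
  Num.floor ((B.+1)%:R * alpha) - 1.

Definition binom_cdf (R : realType) (B : nat) (q : R) (k : int) : R :=
  \sum_(r < B.+1 | (r%:Z <= k)%R) ('C(B, r))%:R * q ^+ r * (1 - q) ^+ (B - r).

(* q(x) = P(T(x^pi) >= T(x)) for pi uniform on the finite group gT. *)
Definition qfun (R : realType) (D : Type) (gT : finGroupType)
  (act : D -> gT -> D) (T : D -> R) (x : D) : R :=
  #|[set g : gT | T x <= T (act x g)]|%:R / #|gT|%:R.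

Definition Pow (R : realType) (d : measure_display) (Omega : measurableType d)
  (P : probability Omega R) (D : Type) (gT : finGroupType)
  (act : D -> gT -> D) (T : D -> R) (X : Omega -> D) (alpha : R) (B : nat)
  : \bar R :=
  (\int[P]_(w in setT) (binom_cdf B (qfun act T (X w)) (kcrit alpha B))%:E)%E.

(* Main.v *)
Require Import Defs.
From HB Require Import structures.
From mathcomp Require Import all_boot all_order all_algebra all_fingroup.
From mathcomp Require Import all_classical all_reals all_analysis.
From mathcomp Require Import measurable_realfun.
From mathcomp Require Import ring lra zify.
Set Implicit Arguments. Unset Strict Implicit. Unset Printing Implicit Defensive.
Import Order.TTheory GRing.Theory Num.Theory.
Local Open Scope classical_set_scope.
Local Open Scope ring_scope.

Section Alg.
Variable R : realType.
Implicit Types q : R.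

Definition pmf (B r : nat) q : R := ('C(B, r))%:R * q ^+ r * (1 - q) ^+ (B - r).
Definition Sc (B n : nat) q : R := \sum_(r < n) pmf B r q.

Lemma S_recr B n q : Sc B n.+1 q = Sc B n q + pmf B n q.
Proof. by rewrite /Sc big_ord_recr. Qed.

Lemma pascal B n q : Sc B.+1 n.+1 q = (1 - q) * Sc B n.+1 q + q * Sc B n q.
Proof.
rewrite /Sc big_ord_recl [in X in _ = _ * X + _]big_ord_recl mulrDr -addrA.
rewrite !mulr_sumr -big_split /=.
congr (_ + _).
  by rewrite /pmf !bin0 !subn0 !expr0 !mulr1 !mul1r exprS.
apply: eq_bigr => i _; rewrite /pmf /bump /= !add1n binS natrD.
have [iB|Bi] := ltnP i B.
  have -> : (B.+1 - i.+1 = B - i)%N by rewrite subSS.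
  have -> : (B - i = (B - i.+1).+1)%N by lia.
  rewrite !exprS; ring.
rewrite (bin_small (n:=B)) ?ltnS // mul0r !mul0r add0r mulr0 add0r subSS exprS; ring.
Qed.

Lemma S_up B n q : Sc B.+1 n.+1 q = Sc B n q + (1 - q) * pmf B n q.
Proof. rewrite pascal S_recr; ring. Qed.

Lemma S_down B n q : Sc B.+1 n.+1 q = Sc B n.+1 q - q * pmf B n q.
Proof. rewrite pascal S_recr; ring. Qed.

End Alg.

Section Alg2.
Variable R : realType.
Implicit Types q : R.
Lemma bc_S B n q : binom_cdf B q (n%:Z - 1) = Sc B n q.
Proof.
rewrite /binom_cdf /Sc.
have cE (r : 'I_B.+1) : (r%:Z <= n%:Z - 1) = (r < n)%N.
  by apply/idP/idP; lia.
under eq_bigl do rewrite cE.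
rewrite (big_ord_widen_cond (n + B.+1) (fun r => (r < n)%N) (fun r => pmf B r q)) ?leq_addl //.
rewrite (big_ord_widen (n + B.+1) (fun r => pmf B r q)) ?leq_addr //.
rewrite big_mkcond [RHS]big_mkcond /=; apply: eq_bigr => i _ /=.
case: (i < n)%N => //=; case: ltnP => // Bi.
by rewrite /pmf bin_small // !mul0r.
Qed.
End Alg2.

Section Arith.
Variable R : realType.
Variable alpha : R.
Hypothesis a0 : 0 < alpha.
Hypothesis a1 : alpha < 1.

Definition nfl (m : nat) : nat := `|Num.floor (m%:R * alpha)|%N.

Lemma floorE m : Num.floor (m%:R * alpha) = (nfl m)%:Z.
Proof. by rewrite /nfl gez0_abs // floor_ge0 mulr_ge0 // ltW. Qed.

Lemma kcritE B : kcrit alpha B = (nfl B.+1)%:Z - 1.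
Proof. by rewrite /kcrit floorE. Qed.

Lemma nfl_le m : (nfl m)%:R <= m%:R * alpha.
Proof. by have := floor_le (m%:R * alpha); rewrite floorE. Qed.

Lemma nfl_gt m : m%:R * alpha < (nfl m)%:R + 1.
Proof. by have := floorD1_gt (m%:R * alpha); rewrite floorE rmorphD /=. Qed.

Lemma nfl_lt m : (nfl m.+1 <= m)%N.
Proof.
rewrite -ltnS -(ltr_nat R); apply: (le_lt_trans (nfl_le _)).
by rewrite -[X in _ < X]mulr1 ltr_pM2l // ltr0Sn.
Qed.

Lemma nfl_step m : (nfl m.+1 <= (nfl m).+1)%N.
Proof.
rewrite -ltnS -(ltr_nat R); apply: (le_lt_trans (nfl_le _)).
have := nfl_gt m.
rewrite -[(m.+1)%:R]natr1 -[((nfl m).+2)%:R]natr1 -[((nfl m).+1)%:R]natr1 mulrDl mul1r.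
by move=> h; apply: ltrD.
Qed.

Lemma nfl_mono m : (nfl m <= nfl m.+1)%N.
Proof.
rewrite -ltnS -(ltr_nat R); apply: (le_lt_trans (nfl_le _)).
have := nfl_gt m.+1.
rewrite -[(m.+1)%:R]natr1 -[((nfl m.+1).+1)%:R]natr1 mulrDl mul1r.
by move=> h; apply: lt_trans h; rewrite ltrDl.
Qed.
End Arith.

Section Peak.
Variable R : realType.
Variable alpha : R.
Hypothesis a0 : 0 < alpha.
Hypothesis a1 : alpha < 1.
Local Notation nf := (nfl alpha).

Lemma archi (x : R) : exists t : nat, x < t%:R.
Proof. by exists (Num.truncn x).+1; exact: truncnS_gt. Qed.

Lemma nfl_unb K N : exists m, (N <= m)%N /\ (K < nf m)%N.
Proof.
have [t ht] := archi (K.+1%:R / alpha).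
exists (N + t)%N; split; first exact: leq_addr.
rewrite -(ltr_nat R).
have h1 := nfl_gt a0 (N + t).
have h2 : K.+1%:R < (N + t)%:R * alpha.
  rewrite -ltr_pdivrMr //; apply: (lt_le_trans ht).
  by rewrite ler_nat leq_addl.
have : K.+1%:R < (nf (N + t))%:R + 1 :> R by apply: lt_trans h1.
by rewrite -natr1 ltrD2r.
Qed.

Lemma flat_le N : (forall j, (N <= j)%N -> (nf j.+1 <= nf j)%N) ->
  forall t, (nf (N + t) <= nf N)%N.
Proof.
move=> H; elim=> [|t IH]; first by rewrite addn0.
rewrite addnS; apply: leq_trans IH; apply: H; exact: leq_addr.
Qed.

Lemma grow m0 : (forall j, (m0 <= j)%N -> (nf j < nf j.+1)%N -> (nf j.+1 < nf j.+2)%N) ->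
  (nf m0 < nf m0.+1)%N -> forall t, (t <= nf (m0 + t))%N /\ (nf (m0 + t) < nf (m0 + t).+1)%N.
Proof.
move=> H h0; elim=> [|t [IH1 IH2]]; first by rewrite addn0.
rewrite addnS; split; first exact: leq_ltn_trans IH2.
by apply: H => //; rewrite leq_addr.
Qed.

Lemma exists_peak N : exists m, [/\ (N <= m)%N, (nf m < nf m.+1)%N & nf m.+1 = nf m.+2].
Proof.
apply: contrapT => Hn.
have H : forall j, (N <= j)%N -> (nf j < nf j.+1)%N -> (nf j.+1 < nf j.+2)%N.
  move=> j Nj lt1; have := nfl_mono a0 j.+1; rewrite leq_eqVlt => /orP[/eqP e|//].
  by exfalso; apply: Hn; exists j; split.
have [m0 [Nm0 lt0]] : exists m0, (N <= m0)%N /\ (nf m0 < nf m0.+1)%N.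
  apply: contrapT => Hn2.
  have fl : forall j, (N <= j)%N -> (nf j.+1 <= nf j)%N.
    move=> j Nj; rewrite leqNgt; apply/negP => lt; apply: Hn2; by exists j.
  have [m [Nm Km]] := nfl_unb (nf N) N.
  have := flat_le fl (m - N); rewrite subnKC //; by rewrite leqNgt Km.
have H' : forall j, (m0 <= j)%N -> (nf j < nf j.+1)%N -> (nf j.+1 < nf j.+2)%N.
  by move=> j hj; apply: H; apply: leq_trans hj.
have [t ht] := archi (m0%:R * alpha / (1 - alpha)).
have [g _] := grow H' lt0 t.
have h1 := nfl_le a0 (m0 + t).
have : (t%:R : R) <= (m0 + t)%:R * alpha.
  by apply: le_trans h1; rewrite ler_nat.
rewrite ltr_pdivrMr ?subr_gt0 // in ht.
rewrite natrD mulrDl; move: ht; rewrite mulrBr mulr1.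
set u := m0%:R * alpha; set v := t%:R * alpha; set w := (t%:R : R).
move=> ht hh; have : w < w by apply: le_lt_trans hh _; rewrite -ltrBrDr.
by rewrite ltxx.
Qed.
End Peak.

Section Meas.
Local Open Scope ereal_scope.
Lemma strict_int (R : realType) d (Omega : measurableType d) (P : probability Omega R)
  (f g : Omega -> R) (A : set Omega) (c M : R) :
  measurable_fun setT f -> measurable_fun setT g -> measurable A -> (0 < c)%R -> 0 < P A ->
  (forall w, 0 <= f w)%R -> (forall w, f w <= M)%R -> (forall w, f w + c * \1_A w <= g w)%R ->
  \int[P]_(w in setT) (f w)%:E < \int[P]_(w in setT) (g w)%:E.
Proof.
move=> mf mg mA c0 PA f0 fM fg.
have mc : measurable_fun setT (fun w => c * \1_A w)%R.
  by apply: measurable_funM => //; exact: measurable_indic.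
have c1 : forall w, (0 <= c * \1_A w)%R by move=> w; rewrite mulr_ge0 // ?ltW.
apply: (@lt_le_trans _ _ (\int[P]_(w in setT) ((f w + c * \1_A w)%R)%:E)); last first.
  apply: ge0_le_integral => //.
  - by move=> w Hw; rewrite lee_fin addr_ge0.
  - by apply/measurable_EFinP; exact: measurable_funD.
  - by apply/measurable_EFinP.
  - by move=> w Hw; rewrite lee_fin.
under [X in _ < X]eq_integral do rewrite EFinD.
rewrite ge0_integralD //; last 4 first.
  - by move=> w Hw; rewrite lee_fin.
  - by apply/measurable_EFinP.
  - by move=> w Hw; rewrite lee_fin.
  - by apply/measurable_EFinP.
under [X in _ < _ + X]eq_integral do rewrite EFinM.
have i0 : forall w, setT w -> 0 <= ((\1_A w : R))%:E by move=> w Hw; rewrite lee_fin.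
have mi : measurable_fun setT (fun w => ((\1_A w : R))%:E).
  by apply/measurable_EFinP; exact: measurable_indic.
rewrite (@ge0_integralZl_EFin _ _ _ P setT measurableT (fun w => ((\1_A w : R))%:E) i0 mi c (ltW c0)).
rewrite integral_indic // setIT.
have fin : \int[P]_(w in setT) (f w)%:E \is a fin_num.
  rewrite ge0_fin_numE; last by apply: integral_ge0 => w _; rewrite lee_fin.
  apply: (@le_lt_trans _ _ (\int[P]_(w in setT) (cst M%:E w))).
    apply: ge0_le_integral => //.
    - by move=> w Hw; rewrite lee_fin.
    - by apply/measurable_EFinP.
    - by move=> w Hw; rewrite /= lee_fin.
  by rewrite integral_cst //= probability_setT mule1 ltry.
by rewrite lteDl // mule_gt0.
Qed.
End Meas.

Section Meas2.
Lemma mSc (R : realType) d (Omega : measurableType d) (h : Omega -> R) B n :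
  measurable_fun setT h -> measurable_fun setT (fun w => Sc B n (h w)).
Proof.
move=> mh; rewrite /Sc; apply: measurable_sum => r; rewrite /pmf.
apply: measurable_funM; first apply: measurable_funM.
- exact: measurable_cst.
- exact: measurable_funX.
- by apply: measurable_funX; apply: measurable_funB => //; exact: measurable_cst.
Qed.

Lemma card_sumE (R : realType) (gT : finGroupType) (p : pred gT) :
  (#|[set g | p g]%SET|%:R : R) = \sum_(g : gT) (p g)%:R.
Proof.
rewrite -sum1_card natr_sum big_mkcond /=; apply: eq_bigr => g _.
by rewrite inE; case: (p g). Qed.

Lemma mqfun (R : realType) (dD : measure_display) (D : measurableType dD)
  (gT : finGroupType) (act : D -> gT -> D) (T : D -> R) :
  (forall g, measurable_fun setT (fun x => act x g)) ->
  measurable_fun setT T -> measurable_fun setT (qfun act T).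
Proof.
move=> mact mT; rewrite /qfun.
have -> : (fun x => #|[set g | T x <= T (act x g)]%SET|%:R / #|gT|%:R) =
   (fun x => \sum_(g : gT) (nat_of_bool (T x <= T (act x g))%R)%:R) \* cst (#|gT|%:R^-1 : R).
  by apply/funext => x /=; rewrite card_sumE.
apply: measurable_funM; last exact: measurable_cst.
apply: measurable_sum => g.
pose U := [set x | T x <= T (act x g)].
have mU : measurable U.
  have mf : measurable_fun setT (fun x => T (act x g) - T x).
    by apply: measurable_funB => //; apply: measurableT_comp.
  have := mf measurableT _ (measurable_itv `[0%R, +oo[).
  rewrite setTI; congr measurable; apply/seteqP; split => x /=;
    by rewrite in_itv /= andbT subr_ge0.
have -> : (fun x => (nat_of_bool (T x <= T (act x g))%R)%:R) = (\1_U : D -> R).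
  apply/funext => x; rewrite indicE.
  case h: (T x <= T (act x g)).
    by rewrite mem_set.
  by rewrite memNset //= /U /= h.
exact: measurable_indic.
Qed.
End Meas2.

Section Bnd.
Variable R : realType.
Implicit Types q e : R.

Lemma pmf_ge0 B r q : 0 <= q <= 1 -> 0 <= pmf B r q.
Proof.
case/andP=> q0 q1; rewrite /pmf; apply: mulr_ge0; first apply: mulr_ge0.
- exact: ler0n.
- exact: exprn_ge0.
- by apply: exprn_ge0; rewrite subr_ge0.
Qed.

Lemma Sc_ge0 B n q : 0 <= q <= 1 -> 0 <= Sc B n q.
Proof. by move=> hq; apply: sumr_ge0 => r _; exact: pmf_ge0. Qed.

Lemma Sc_le B n q : 0 <= q <= 1 -> Sc B n q <= \sum_(r < n) ('C(B, r))%:R.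
Proof.
case/andP=> q0 q1; apply: ler_sum => r _; rewrite /pmf -mulrA.
apply: ler_piMr; first exact: ler0n.
apply: mulr_ile1.
- exact: exprn_ge0.
- by apply: exprn_ge0; rewrite subr_ge0.
- exact: exprn_ile1.
- by apply: exprn_ile1; rewrite ?subr_ge0 // lerBlDr lerDl.
Qed.

Lemma pmf_lb B n q e : 0 <= e -> e <= q -> e <= 1 - q -> (n <= B)%N -> e ^+ B <= pmf B n q.
Proof.
move=> e0 eq ep nB; rewrite /pmf.
have -> : e ^+ B = 1 * e ^+ n * e ^+ (B - n) by rewrite mul1r -exprD subnKC.
have en : 0 <= e ^+ n by exact: exprn_ge0.
apply: (@ler_pM _ (1 * e ^+ n) _ (e ^+ (B - n))).
- by rewrite mul1r.
- exact: exprn_ge0.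
- apply: (@ler_pM _ 1 _ (e ^+ n)) => //.
    by rewrite ler1n bin_gt0.
  by apply: lerXn2r; rewrite // nnegrE (le_trans e0).
- by apply: lerXn2r; rewrite // nnegrE (le_trans e0).
Qed.
End Bnd.

Unset Implicit Arguments.

Theorem theorem1 (R : realType) (d : measure_display) (Omega : measurableType d)
  (P : probability Omega R) (dD : measure_display) (D : measurableType dD)
  (gT : finGroupType) (act : D -> gT -> D) (T : D -> R) (X : Omega -> D)
  (alpha : R) :
  0 < alpha < 1 ->
  (forall x, act x 1%g = x) ->
  (forall x g h, act x (g * h)%g = act (act x g) h) ->
  (forall g, measurable_fun setT (fun x => act x g)) ->
  measurable_fun setT T ->
  measurable_fun setT X ->
  (0 < P [set w | (qfun act T (X w) < 1)%R])%E ->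
  (forall B : nat, (2 <= B)%N ->
     kcrit alpha B - kcrit alpha B.-1 = 1 ->
     kcrit alpha B.+1 - kcrit alpha B = 0 ->
     (Pow P act T X alpha B.-1 < Pow P act T X alpha B)%E /\
     (Pow P act T X alpha B.+1 < Pow P act T X alpha B)%E)
  /\
  (forall N : nat, exists B : nat, [/\ (N <= B)%N, (2 <= B)%N,
       kcrit alpha B.-1 < kcrit alpha B & kcrit alpha B = kcrit alpha B.+1])
  /\
  (forall N : nat, exists B : nat, [/\ (N <= B)%N, (2 <= B)%N,
       (Pow P act T X alpha B.-1 < Pow P act T X alpha B)%E &
       (Pow P act T X alpha B.+1 < Pow P act T X alpha B)%E]).
Proof.
move=> /andP[a0 a1] hid hmul mact mT mX hP.
pose h := fun w => qfun act T (X w).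
have mh : measurable_fun setT h := measurableT_comp (mqfun mact mT) mX.
pose N := #|gT|.
have cnt : forall x, (0 < #|[set g | (T x <= T (act x g))%R]%SET|)%N /\
                     (#|[set g | (T x <= T (act x g))%R]%SET| <= N)%N.
  move=> x; split; last exact: max_card.
  by apply/card_gt0P; exists 1%g; rewrite inE hid.
have N0 : (0 < N)%N by apply/card_gt0P; exists 1%g.
have N0' : (0 : R) < N%:R by rewrite ltr0n.
have hb : forall w, 0 <= h w <= 1.
  move=> w; rewrite /h /qfun; have [c1 c2] := cnt (X w).
  apply/andP; split; first by rewrite divr_ge0.
  by rewrite ler_pdivrMr // mul1r ler_nat.
have hA : forall w, h w < 1 -> N%:R^-1 <= h w /\ N%:R^-1 <= 1 - h w.
  move=> w; rewrite /h /qfun; have [c1 c2] := cnt (X w).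
  set c := #|_|; rewrite ltr_pdivrMr // mul1r ltr_nat => cN; split.
    by rewrite -[X in X <= _]mul1r ler_wpM2r // ?invr_ge0 ?ler0n // ler1n.
  rewrite lerBrDr -[X in X + _]mul1r -mulrDl ler_pdivrMr // mul1r (nat1r c) ler_nat; exact: cN.
have PowE : forall B, Pow P act T X alpha B =
    (\int[P]_(w in setT) (Sc B (nfl alpha B.+1) (h w))%:E)%E.
  by move=> B; rewrite /Pow (kcritE a0); apply: eq_integral => y _; rewrite bc_S.
pose A := [set w | h w < 1].
have mA : measurable A.
  have := mh measurableT _ (measurable_itv `]-oo, 1%R[).
  rewrite setTI; congr measurable; apply/seteqP; split => x /=;
    by rewrite in_itv /=.
have PA : (0 < P A)%E by [].
pose e := N%:R^-1 : R.
have e0 : 0 < e by rewrite invr_gt0.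
have up : forall C n, (n <= C)%N ->
    (\int[P]_(y in setT) (Sc C n (h y))%:E <
     \int[P]_(y in setT) (Sc C.+1 n.+1 (h y))%:E)%E.
  move=> C n nC.
  apply: (@strict_int _ _ _ P _ _ A (e ^+ C.+1) (\sum_(r < n) ('C(C, r))%:R)).
  - exact: mSc.
  - exact: mSc.
  - exact: mA.
  - exact: exprn_gt0.
  - exact: PA.
  - by move=> y; apply: Sc_ge0.
  - by move=> y; apply: Sc_le.
  move=> y; rewrite S_up lerD2l indicE.
  have pm0 : 0 <= (1 - h y) * pmf C n (h y).
    by rewrite mulr_ge0 ?pmf_ge0 // subr_ge0; case/andP: (hb y).
  case: (boolP (y \in A)) => wA; last by rewrite mulr0.
  rewrite /= mulr1; have [he1 he2] := hA y (set_mem wA).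
  rewrite exprS; apply: ler_pM => //.
  - exact: ltW.
  - by apply: exprn_ge0; exact: ltW.
  - by apply: pmf_lb => //; exact: ltW.
have down : forall B n, (n <= B)%N ->
    (\int[P]_(y in setT) (Sc B.+1 n.+1 (h y))%:E <
     \int[P]_(y in setT) (Sc B n.+1 (h y))%:E)%E.
  move=> B n nB.
  apply: (@strict_int _ _ _ P _ _ A (e ^+ B.+1) (\sum_(r < n.+1) ('C(B.+1, r))%:R)).
  - exact: mSc.
  - exact: mSc.
  - exact: mA.
  - exact: exprn_gt0.
  - exact: PA.
  - by move=> y; apply: Sc_ge0.
  - by move=> y; apply: Sc_le.
  move=> y; rewrite S_down addrAC lerBlDr lerD2l indicE.
  have pm0 : 0 <= h y * pmf B n (h y).
    by rewrite mulr_ge0 ?pmf_ge0 //; case/andP: (hb y).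
  case: (boolP (y \in A)) => wA; last by rewrite mulr0.
  rewrite /= mulr1; have [he1 he2] := hA y (set_mem wA).
  rewrite exprS; apply: ler_pM => //.
  - exact: ltW.
  - by apply: exprn_ge0; exact: ltW.
  - by apply: pmf_lb => //; exact: ltW.
have mainI : forall B, (2 <= B)%N -> nfl alpha B.+1 = (nfl alpha B).+1 ->
    nfl alpha B.+2 = nfl alpha B.+1 ->
    (Pow P act T X alpha B.-1 < Pow P act T X alpha B)%E /\
    (Pow P act T X alpha B.+1 < Pow P act T X alpha B)%E.
  case=> [|C] // _ e1 e2 /=.
  rewrite !PowE e2 e1; split.
    by apply: up; exact: nfl_lt.
  by apply: down; apply: leqW; exact: nfl_lt.
have peak : forall M, exists m, [/\ (M <= m)%N, (2 <= m)%N,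
    nfl alpha m.+1 = (nfl alpha m).+1 & nfl alpha m.+2 = nfl alpha m.+1].
  move=> M; have [m [Nm lt ee]] := exists_peak a0 a1 (M + 2).
  exists m; split.
  - by apply: leq_trans Nm; exact: leq_addr.
  - by apply: leq_trans Nm; exact: leq_addl.
  - by apply/eqP; rewrite eqn_leq lt nfl_step.
  - by rewrite ee.
split.
  move=> B B2; have B1 : (0 < B)%N by apply: leq_trans B2.
  rewrite !(kcritE a0) prednK // => k1 k2.
  apply: mainI => //; lia.
split.
  move=> M; have [m [Mm m2 e1 e2]] := peak M.
  have m1 : (0 < m)%N by apply: leq_trans m2.
  exists m; split => //; rewrite !(kcritE a0) ?prednK // ?e2 //.
  rewrite e1; lia.
move=> M; have [m [Mm m2 e1 e2]] := peak M.
by exists m; have [? ?] := mainI m m2 e1 e2; split.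
Qed.
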